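(* Up to isometries and dilations of $\mathbf R^{1,1}$, the only space-like curves in $\mathbf R^{1,1}$ that are invariant under a (nontrivial) self-similar motion are: \begin{itemize} \item lines, invariant under translations along their direction vector and dilations about a point on the line; \item hyperbolas with light-like asymptotes, invariant under hyperbolic rotations around their midpoint; \item the Minkowski analogues of logarithmic spirals $X = \frac{1}{1+h\alpha}s^{1+h\alpha}$, i.e. in $(\xi,\eta)$-coordinates $X(s)=\left(\frac{s^{1+\alpha}}{1+\alpha},\frac{s^{1-\alpha}}{1-\alpha}\right)$, $s>0$, invariant under any combination of hyperbolic rotation and dilation $g(t)e^{hf(t)}$ with $e^{f(t)} = g(t)^{\alpha}$; \item the curve $\xi = e^{2\eta}$, invariant under any combination of hyperbolic rotation, dilation and translation with $g(t)=e^{f(t)}$ and $H(t) = (0,f(t))$ (in $(\xi,\eta)$-coordinates). \end{itemize}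
   Context: $\mathbf R^{1,1}$ is $\mathbf R^2$ with $\langle (x_1,y_1),(x_2,y_2)\rangle = x_1x_2-y_1y_2$; points $x+hy$ with $h^2=1$, $e^{hf}=\cosh f+h\sinh f$, $s^{1+h\alpha}=s\,e^{h\alpha\log s}$. Light-like coordinates $\xi=x+y$, $\eta=x-y$, writing a point as $(\xi,\eta)$; in these coordinates multiplication is componentwise and $e^{hf}=(e^f,e^{-f})$. A self-similar motion of a curve $X$ is $\hat X(u,t)=g(t)e^{hf(t)}X(u)+H(t)$ with differentiable $f,g:J\to\mathbf R$, $H:J\to\mathbf R^{1,1}$, $f(0)=0$, $g(0)=1$, $H(0)=0$. The curve is invariant under the motion if $\langle\partial_t\hat X, N\rangle=0$, where $N$ is the unit normal (reflection of the unit tangent across $y=x$), i.e. the motion maps the curve into itself up to reparametrization. *)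

(* Defs.v *)
From Stdlib Require Import Reals.
From Coquelicot Require Import Coquelicot.
Open Scope R_scope.

(** Points of R^{1,1} in (x,y)-coordinates: p = x + h y. *)
Definition mink (p q : R * R) : R := fst p * fst q - snd p * snd q.

Definition xi (p : R * R) : R := fst p + snd p.
Definition eta (p : R * R) : R := fst p - snd p.

(** Multiplication in the hyperbolic numbers (h^2 = 1). *)
Definition hmul (p q : R * R) : R * R :=
  (fst p * fst q + snd p * snd q, fst p * snd q + snd p * fst q).

(** e^{h f} = cosh f + h sinh f. *)
Definition ehf (f : R) : R * R := (cosh f, sinh f).

Definition in_open (a b : Rbar) (u : R) : Prop :=
  Rbar_lt a (Finite u) /\ Rbar_lt (Finite u) b.

Definition dcurve (X : R -> R * R) (u : R) : R * R :=
  (Derive (fun s => fst (X s)) u, Derive (fun s => snd (X s)) u).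

Definition space_like_curve (a b : Rbar) (X : R -> R * R) : Prop :=
  Rbar_lt a b /\
  (forall (n : nat) (u : R), in_open a b u ->
     ex_derive_n (fun s => fst (X s)) n u /\ ex_derive_n (fun s => snd (X s)) n u) /\
  (forall u : R, in_open a b u -> mink (dcurve X u) (dcurve X u) > 0).

(** Unit normal: reflection of the unit tangent across y = x. *)
Definition unit_normal (v : R * R) : R * R :=
  let n := sqrt (mink v v) in (snd v / n, fst v / n).

(** The motion  X^(u,t) = g(t) e^{h f(t)} X(u) + H(t). *)
Definition motion (f g : R -> R) (H : R -> R * R) (P : R * R) (t : R) : R * R :=
  (g t * fst (hmul (ehf (f t)) P) + fst (H t),
   g t * snd (hmul (ehf (f t)) P) + snd (H t)).

Definition self_similar_motion (c d : Rbar) (f g : R -> R) (H : R -> R * R) : Prop :=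
  in_open c d 0 /\
  (forall t, in_open c d t ->
     ex_derive f t /\ ex_derive g t /\
     ex_derive (fun s => fst (H s)) t /\ ex_derive (fun s => snd (H s)) t) /\
  f 0 = 0 /\ g 0 = 1 /\ H 0 = (0, 0).

Definition nontrivial_motion (c d : Rbar) (f g : R -> R) (H : R -> R * R) : Prop :=
  exists t, in_open c d t /\ (f t <> 0 \/ g t <> 1 \/ H t <> (0, 0)).

Definition invariant_under (a b : Rbar) (X : R -> R * R)
    (c d : Rbar) (f g : R -> R) (H : R -> R * R) : Prop :=
  forall u t, in_open a b u -> in_open c d t ->
    mink (Derive (fun s => fst (motion f g H (X u) s)) t,
          Derive (fun s => snd (motion f g H (X u) s)) t)
         (unit_normal (dcurve (fun s => motion f g H (X s) t) u)) = 0.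

Definition invariant_nontrivial (a b : Rbar) (X : R -> R * R) : Prop :=
  exists (c d : Rbar) (f g : R -> R) (H : R -> R * R),
    self_similar_motion c d f g H /\ nontrivial_motion c d f g H /\
    invariant_under a b X c d f g H.

(** Similarities of R^{1,1}: an isometry (Lorentz transformation, possibly
    orientation/time reversing, plus translation) followed by a dilation. *)
Definition similarity (S : R * R -> R * R) : Prop :=
  exists (lam p q r s b1 b2 : R),
    lam > 0 /\
    (forall v w : R * R,
       mink (p * fst v + q * snd v, r * fst v + s * snd v)
            (p * fst w + q * snd w, r * fst w + s * snd w) = mink v w) /\
    (forall v : R * R,
       S v = (lam * (p * fst v + q * snd v) + b1, lam * (r * fst v + s * snd v) + b2)).

Definition on_line (P : R * R) : Prop := snd P = 0.
Definition on_hyperbola (P : R * R) : Prop := xi P * eta P = -1.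
Definition on_spiral (alpha : R) (P : R * R) : Prop :=
  exists s : R, s > 0 /\
    xi P = Rpower s (1 + alpha) / (1 + alpha) /\
    eta P = Rpower s (1 - alpha) / (1 - alpha).
Definition on_exp_curve (P : R * R) : Prop := xi P = exp (2 * eta P).

(* Main.v *)
Require Import Defs.
From Stdlib Require Import Reals.
From Coquelicot Require Import Coquelicot.
From Stdlib Require Import Lra Classical.
Open Scope R_scope.


Lemma in_open_loc a b u : in_open a b u -> locally u (in_open a b).
Proof. intros [H1 H2]. apply (locally_interval _ u a b H1 H2). intros y Hy1 Hy2; split; auto. Qed.

Lemma in_open_between a b u v w : in_open a b u -> in_open a b v -> u <= w <= v -> in_open a b w.
Proof. intros [H1 H2] [H3 H4] [H5 H6]; split.
 destruct a; simpl in *; auto; lra.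
 destruct b; simpl in *; auto; lra. Qed.

Lemma in_open_ex a b : Rbar_lt a b -> exists u, in_open a b u.
Proof. intros H. destruct a as [a| |], b as [b| |]; simpl in H; try contradiction.
 - exists ((a+b)/2); split; simpl; lra.
 - exists (a+1); split; simpl; auto; lra.
 - exists (b-1); split; simpl; auto; lra.
 - exists 0; split; simpl; auto.
Qed.

Lemma zero_deriv a b F u l : (forall w, in_open a b w -> F w = 0) -> in_open a b u ->
  is_derive F u l -> l = 0.
Proof. intros HF Hu Hd.
 assert (H0 : is_derive F u 0).
 { apply (is_derive_ext_loc (fun _ => 0)). 
   apply (filter_imp (in_open a b)). intros w Hw; rewrite HF; auto. apply in_open_loc; auto.
   auto_derive; auto. }
 rewrite <- (is_derive_unique _ _ _ Hd). apply is_derive_unique; auto. Qed.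

Lemma mvt_I a b F dF u v : in_open a b u -> in_open a b v -> u < v ->
  (forall w, in_open a b w -> is_derive F w (dF w)) ->
  exists c, u < c < v /\ F v - F u = dF c * (v - u).
Proof. intros Hu Hv Huv Hd.
 destruct (MVT_cor2 F dF u v Huv) as [c [Hc1 Hc2]].
 { intros c Hc. apply is_derive_Reals. apply Hd. apply (in_open_between a b u v); auto. }
 exists c; split; auto. Qed.

Lemma const_I a b F u v : (forall w, in_open a b w -> is_derive F w 0) ->
  in_open a b u -> in_open a b v -> F u = F v.
Proof. intros Hd Hu Hv. destruct (Rtotal_order u v) as [H|[H|H]].
 - destruct (mvt_I a b F (fun _ => 0) u v) as [c [_ Hc]]; auto. lra.
 - subst; auto.
 - destruct (mvt_I a b F (fun _ => 0) v u) as [c [_ Hc]]; auto. lra.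
Qed.

Lemma const_except_lt a b F dF Z u v : 
  (forall w, in_open a b w -> is_derive F w (dF w)) ->
  (forall w, in_open a b w -> Z w <> 0 -> dF w = 0) ->
  (forall w1 w2, in_open a b w1 -> in_open a b w2 -> Z w1 = 0 -> Z w2 = 0 -> w1 = w2) ->
  in_open a b u -> in_open a b v -> u < v -> F u = F v.
Proof. intros Hd HZ Hinj Hu Hv Huv.
 destruct (classic (exists w, u <= w <= v /\ Z w = 0)) as [[w [Hw Zw]]|Hn].
 - assert (Hwi : in_open a b w) by (apply (in_open_between a b u v); auto).
   assert (A1 : F u = F w).
   { destruct (Req_dec u w) as [E|E]; [subst; auto|].
     destruct (mvt_I a b F dF u w) as [c [Hc1 Hc2]]; auto. lra.
     assert (Hci : in_open a b c) by (apply (in_open_between a b u w); auto; lra).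
     rewrite HZ in Hc2; auto. lra.
     intro Zc. assert (c = w) by (apply Hinj; auto). lra. }
   assert (A2 : F w = F v).
   { destruct (Req_dec w v) as [E|E]; [subst; auto|].
     destruct (mvt_I a b F dF w v) as [c [Hc1 Hc2]]; auto. lra.
     assert (Hci : in_open a b c) by (apply (in_open_between a b w v); auto; lra).
     rewrite HZ in Hc2; auto. lra.
     intro Zc. assert (c = w) by (apply Hinj; auto). lra. }
   congruence.
 - destruct (mvt_I a b F dF u v) as [c [Hc1 Hc2]]; auto.
   assert (Hci : in_open a b c) by (apply (in_open_between a b u v); auto; lra).
   rewrite HZ in Hc2; auto. lra.
   intro Zc. apply Hn. exists c; split; auto; lra.
Qed.

Lemma const_except a b F dF Z u v : 
  (forall w, in_open a b w -> is_derive F w (dF w)) ->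
  (forall w, in_open a b w -> Z w <> 0 -> dF w = 0) ->
  (forall w1 w2, in_open a b w1 -> in_open a b w2 -> Z w1 = 0 -> Z w2 = 0 -> w1 = w2) ->
  in_open a b u -> in_open a b v -> F u = F v.
Proof. intros. destruct (Rtotal_order u v) as [H'|[H'|H']].
 - eapply const_except_lt; eauto.
 - subst; auto.
 - symmetry; eapply const_except_lt; eauto. Qed.

Lemma sign_const a b F u v : (forall w, in_open a b w -> ex_derive F w) ->
  (forall w, in_open a b w -> F w <> 0) -> in_open a b u -> in_open a b v -> F u * F v > 0.
Proof. intros Hd Hnz Hu Hv.
 assert (Hc : forall w, in_open a b w -> continuity_pt F w).
 { intros w Hw. destruct (Hd w Hw) as [l Hl]. apply is_derive_Reals in Hl.
   apply (derivable_continuous_pt F w (exist _ l Hl)). }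
 assert (Hu0 := Hnz u Hu). assert (Hv0 := Hnz v Hv).
 destruct (Rlt_or_le 0 (F u * F v)) as [H|H]; [lra|exfalso].
 assert (key : forall x y, in_open a b x -> in_open a b y -> x < y -> F x * F y <= 0 -> False).
 { intros x y Hx Hy Hxy Hp.
   assert (Hx0 := Hnz x Hx). assert (Hy0 := Hnz y Hy).
   destruct (Rlt_or_le (F x) 0) as [Fx|Fx].
   - assert (Fy : 0 < F y) by (destruct (Rlt_or_le 0 (F y)); auto; nra).
     destruct (Ranalysis5.IVT_interv F x y) as [z [Hz Fz]]; auto.
     intros c Hcc; apply Hc; apply (in_open_between a b x y); auto.
     apply (Hnz z); auto. apply (in_open_between a b x y); auto.
   - assert (Fy : F y < 0) by (destruct (Rlt_or_le (F y) 0); auto; nra).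
     destruct (Ranalysis5.IVT_interv (fun w => - F w) x y) as [z [Hz Fz]]; auto.
     intros c Hcc. apply continuity_pt_opp. apply Hc; apply (in_open_between a b x y); auto.
     lra. lra.
     apply (Hnz z). apply (in_open_between a b x y); auto. lra. }
 destruct (Rtotal_order u v) as [E|[E|E]].
 - apply (key u v); auto.
 - subst. nra.
 - apply (key v u); auto; lra.
Qed.

Ltac etared := repeat match goal with |- context [fun x : R => ?F x] => change (fun x : R => F x) with F end.
Definition C2 a b (U : R -> R) := forall u, in_open a b u -> ex_derive U u /\ ex_derive (Derive U) u.
Definition Rel a b (U V : R -> R) k1 c1 k2 c2 := forall u, in_open a b u ->
  (k1 * U u + c1) * Derive V u = (k2 * V u + c2) * Derive U u.
Definition SL a b (U V : R -> R) := forall u, in_open a b u -> Derive U u * Derive V u > 0.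

Definition model_out a b (U V : R -> R) := exists A B b1 b2, A*B > 0 /\ (
 (forall u, in_open a b u -> A*U u + b1 = B*V u + b2) \/
 (forall u, in_open a b u -> (A*U u + b1)*(B*V u + b2) = -1) \/
 (exists al, al <> 1 /\ al <> -1 /\ forall u, in_open a b u -> exists s, s > 0 /\
     A*U u + b1 = Rpower s (1+al)/(1+al) /\ B * V u + b2 = Rpower s (1-al)/(1-al)) \/
 (forall u, in_open a b u -> A*U u + b1 = exp (2*(B*V u + b2)))).

Lemma L_line a b U V : Rbar_lt a b -> C2 a b U -> C2 a b V -> SL a b U V ->
  (exists mu, forall u, in_open a b u -> Derive V u = mu * Derive U u) -> model_out a b U V.
Proof. intros Hab HU HV HS [mu Hmu].
 destruct (in_open_ex a b Hab) as [u0 Hu0].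
 assert (Hc : forall u, in_open a b u -> (fun w => V w - mu * U w) u = (fun w => V w - mu * U w) u0).
 { intros u Hu. apply (const_I a b (fun w => V w - mu * U w)); auto. intros w Hw.
   destruct (HU w Hw) as [HU1 _]. destruct (HV w Hw) as [HV1 _].
   auto_derive; auto. etared. rewrite Hmu; auto. ring. }
 assert (Hpos : mu > 0).
 { specialize (HS u0 Hu0). rewrite Hmu in HS; auto.
   destruct (Rlt_or_le 0 mu); auto. nra. }
 exists mu, 1, (V u0 - mu * U u0), 0. split. lra.
 left. intros u Hu. specialize (Hc u Hu). simpl in Hc. lra.
Qed.

Lemma L_no_origin a b U V k1 c1 k2 c2 : C2 a b U -> C2 a b V -> SL a b U V ->
  Rel a b U V k1 c1 k2 c2 -> k1 <> k2 -> forall u, in_open a b u ->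
  k1 * U u + c1 <> 0 /\ k2 * V u + c2 <> 0.
Proof. intros HU HV HS HR Hk u Hu.
 destruct (HU u Hu) as [HU1 HU2]. destruct (HV u Hu) as [HV1 HV2].
 assert (HD : k1 * Derive U u * Derive V u + (k1 * U u + c1) * Derive (Derive V) u
    - (k2 * Derive V u * Derive U u + (k2 * V u + c2) * Derive (Derive U) u) = 0).
 { apply (zero_deriv a b (fun w => (k1 * U w + c1) * Derive V w - (k2 * V w + c2) * Derive U w) u); auto.
   intros w Hw. rewrite (HR w Hw). ring.
   auto_derive. etared. repeat split; auto. etared. ring. }
 assert (HS0 := HS u Hu). assert (HR0 := HR u Hu).
 assert (U1 : Derive U u <> 0) by (intro E; rewrite E in HS0; lra).
 assert (V1 : Derive V u <> 0) by (intro E; rewrite E in HS0; lra).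
 split; intro E.
 - rewrite E in HR0. assert (E2 : k2 * V u + c2 = 0).
   { assert (H : (k2 * V u + c2) * Derive U u = 0) by lra.
     apply Rmult_integral in H. destruct H as [H|H]; auto. contradiction. }
   rewrite E, E2 in HD. apply Hk. 
   assert ((k1 - k2) * (Derive U u * Derive V u) = 0) by lra.
   apply Rmult_integral in H. destruct H; lra.
 - rewrite E in HR0. assert (E2 : k1 * U u + c1 = 0).
   { assert (H : (k1 * U u + c1) * Derive V u = 0) by lra.
     apply Rmult_integral in H. destruct H as [H|H]; auto. contradiction. }
   rewrite E, E2 in HD. apply Hk.
   assert ((k1 - k2) * (Derive U u * Derive V u) = 0) by lra.
   apply Rmult_integral in H. destruct H; lra.
Qed.

Lemma exp_neg_mul x : exp (- x) * exp x = 1.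
Proof. rewrite <- exp_plus. replace (-x + x) with 0 by ring. apply exp_0. Qed.

Lemma L_exp a b U V k1 c1 c2 : Rbar_lt a b -> C2 a b U -> C2 a b V -> SL a b U V ->
  Rel a b U V k1 c1 0 c2 -> k1 <> 0 -> model_out a b U V.
Proof. intros Hab HU HV HS HR Hk1.
 destruct (in_open_ex a b Hab) as [u0 Hu0].
 assert (Hno := L_no_origin a b U V k1 c1 0 c2 HU HV HS HR Hk1).
 assert (Hc2 : c2 <> 0) by (destruct (Hno u0 Hu0) as [_ H]; lra).
 set (F := fun w => (U w + c1/k1) * exp (- (k1/c2) * V w)).
 assert (HF : forall u, in_open a b u -> F u = F u0).
 { intros u Hu. apply (const_I a b F); auto. intros w Hw.
   destruct (HU w Hw) as [HU1 _]. destruct (HV w Hw) as [HV1 _].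
   unfold F. auto_derive; auto. etared.
   assert (E := HR w Hw). 
   replace (1 * Derive U w * exp (- (k1 / c2) * V w) +
     (U w + c1 / k1) * (- (k1 / c2) * (1 * Derive V w) * exp (- (k1 / c2) * V w)))
   with (exp (- (k1 / c2) * V w) * ((0 * V w + c2) * Derive U w - (k1 * U w + c1) * Derive V w) / c2)
   by (field; auto). rewrite E. field; auto. }
 set (K := F u0).
 assert (HK : K * k1 * c2 > 0).
 { unfold K, F. assert (E := HR u0 Hu0). assert (S := HS u0 Hu0).
   assert (Ep := exp_pos (- (k1 / c2) * V u0)).
   assert (H1 : (k1 * U u0 + c1) * c2 > 0).
   { assert (H2 : (k1 * U u0 + c1) * c2 * (Derive U u0 * Derive V u0) = c2 * c2 * (Derive U u0 * Derive U u0)).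
     { replace ((k1 * U u0 + c1) * c2 * (Derive U u0 * Derive V u0)) with
         (c2 * Derive U u0 * ((k1 * U u0 + c1) * Derive V u0)) by ring. rewrite E. ring. }
     assert (c2 * c2 * (Derive U u0 * Derive U u0) > 0).
     { assert (Derive U u0 <> 0) by (intro Z; rewrite Z in S; lra).
       apply Rmult_lt_0_compat; apply Rsqr_pos_lt; auto. }
     destruct (Rlt_or_le 0 ((k1 * U u0 + c1) * c2)) as [L|L]; auto. nra. }
   replace ((U u0 + c1 / k1) * exp (- (k1 / c2) * V u0) * k1 * c2) with
     (exp (- (k1 / c2) * V u0) * ((k1 * U u0 + c1) * c2)) by (field; auto).
   apply Rmult_lt_0_compat; auto. }
 assert (HK0 : K <> 0) by (intro Z; rewrite Z in HK; lra).
 exists (/K), (k1/(2*c2)), (c1/(k1*K)), 0. split.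
 - replace (/ K * (k1 / (2 * c2))) with ((K * k1 * c2) / (2 * ((c2 * K) * (c2 * K)))) by (field; auto).
   apply Rdiv_lt_0_compat; auto. assert (c2 * K <> 0) by (apply Rmult_integral_contrapositive_currified; auto).
   assert (0 < (c2 * K) * (c2 * K)) by (apply Rsqr_pos_lt; auto). lra.
 - right; right; right. intros u Hu. specialize (HF u Hu). fold K in HF. unfold F in HF.
   assert (E1 : U u + c1 / k1 = K * exp ((k1/c2) * V u)).
   { rewrite <- HF. rewrite Rmult_assoc. replace (- (k1 / c2) * V u) with (- ((k1/c2) * V u)) by ring.
     rewrite exp_neg_mul. ring. }
   replace (/ K * U u + c1 / (k1 * K)) with ((U u + c1 / k1) / K) by (field; auto).
   rewrite E1. replace (2 * (k1 / (2 * c2) * V u + 0)) with (k1 / c2 * V u) by (field; auto).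
   field; auto.
Qed.

Lemma L_E2 a b U V k1 c1 k2 c2 : C2 a b U -> C2 a b V -> 
  Rel a b U V k1 c1 k2 c2 -> forall u, in_open a b u ->
  k1 * Derive U u * Derive V u + (k1 * U u + c1) * Derive (Derive V) u
    - (k2 * Derive V u * Derive U u + (k2 * V u + c2) * Derive (Derive U) u) = 0.
Proof. intros HU HV HR u Hu.
 destruct (HU u Hu) as [HU1 HU2]. destruct (HV u Hu) as [HV1 HV2].
 apply (zero_deriv a b (fun w => (k1 * U w + c1) * Derive V w - (k2 * V w + c2) * Derive U w) u); auto.
 intros w Hw. rewrite (HR w Hw). ring.
 auto_derive. etared. repeat split; auto. etared. ring. Qed.

Lemma L_lineB a b U V k c1 c2 : Rbar_lt a b -> C2 a b U -> C2 a b V -> SL a b U V ->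
  Rel a b U V k c1 k c2 -> k <> 0 -> model_out a b U V.
Proof. intros Hab HU HV HS HR Hk.
 destruct (in_open_ex a b Hab) as [u0 Hu0].
 apply L_line; auto. exists (Derive V u0 / Derive U u0).
 assert (U1 : forall w, in_open a b w -> Derive U w <> 0).
 { intros w Hw Z. specialize (HS w Hw). rewrite Z in HS. lra. }
 set (m := fun w => Derive V w / Derive U w).
 set (dm := fun w => (Derive (Derive V) w * Derive U w - Derive V w * Derive (Derive U) w)
      / (Derive U w * Derive U w)).
 assert (Hm : forall u, in_open a b u -> m u = m u0).
 { intros u Hu. apply (const_except a b m dm (fun w => k * U w + c1)); auto.
   - intros w Hw. destruct (HU w Hw) as [HU1 HU2]. destruct (HV w Hw) as [HV1 HV2].
     unfold m, dm. auto_derive. etared. repeat split; auto. etared. 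
     field. auto.
   - intros w Hw Zw. unfold dm. assert (E1 := HR w Hw). assert (E2 := L_E2 _ _ _ _ _ _ _ _ HU HV HR w Hw).
     assert (E3 : (k * U w + c1) * (Derive (Derive V) w * Derive U w - Derive V w * Derive (Derive U) w) = 0).
     { replace ((k * U w + c1) * (Derive (Derive V) w * Derive U w - Derive V w * Derive (Derive U) w))
        with (Derive U w * ((k * U w + c1) * Derive (Derive V) w) - Derive (Derive U) w * ((k * U w + c1) * Derive V w)) by ring.
       rewrite E1. replace ((k * U w + c1) * Derive (Derive V) w) with ((k * V w + c2) * Derive (Derive U) w) by lra.
       ring. }
     apply Rmult_integral in E3. destruct E3 as [E3|E3]. contradiction. rewrite E3. apply Rmult_0_l.
   - intros w1 w2 Hw1 Hw2 Z1 Z2. 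
     assert (EU : U w1 = U w2) by (apply (Rmult_eq_reg_l k); auto; lra).
     destruct (Rtotal_order w1 w2) as [L|[L|L]]; auto; exfalso.
     + destruct (mvt_I a b U (Derive U) w1 w2) as [c [Hc1 Hc2]]; auto.
       intros w Hw. destruct (HU w Hw) as [HU1 _]. apply Derive_correct; auto.
       apply (U1 c). apply (in_open_between a b w1 w2); auto; lra.
       assert (Derive U c * (w2 - w1) = 0) by lra. apply Rmult_integral in H. destruct H; auto. lra.
     + destruct (mvt_I a b U (Derive U) w2 w1) as [c [Hc1 Hc2]]; auto.
       intros w Hw. destruct (HU w Hw) as [HU1 _]. apply Derive_correct; auto.
       apply (U1 c). apply (in_open_between a b w2 w1); auto; lra.
       assert (Derive U c * (w1 - w2) = 0) by lra. apply Rmult_integral in H. destruct H; auto. lra. }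
 intros u Hu. specialize (Hm u Hu). unfold m in Hm. rewrite <- Hm. field. auto.
Qed.

Lemma L_hyp a b U V k c1 c2 : Rbar_lt a b -> C2 a b U -> C2 a b V -> SL a b U V ->
  Rel a b U V k c1 (-k) c2 -> k <> 0 -> model_out a b U V.
Proof. intros Hab HU HV HS HR Hk.
 destruct (in_open_ex a b Hab) as [u0 Hu0].
 assert (Hno := L_no_origin a b U V k c1 (-k) c2 HU HV HS HR ltac:(lra)).
 set (P := fun w => (U w + c1/k) * (V w - c2/k)).
 assert (HP : forall u, in_open a b u -> P u = P u0).
 { intros u Hu. apply (const_I a b P); auto. intros w Hw.
   destruct (HU w Hw) as [HU1 _]. destruct (HV w Hw) as [HV1 _].
   unfold P. auto_derive; auto. etared. assert (E := HR w Hw). destruct (Hno w Hw) as [N1 N2].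
   assert (E2 : Derive V w = (- k * V w + c2) * Derive U w / (k * U w + c1)).
   { apply (Rmult_eq_reg_l (k * U w + c1)); auto. rewrite E. field. auto. }
   rewrite E2. field. auto. }
 set (K := P u0).
 assert (HK : K < 0).
 { unfold K, P. assert (E := HR u0 Hu0). assert (S := HS u0 Hu0). destruct (Hno u0 Hu0) as [N1 N2].
   assert (U1 : Derive U u0 <> 0) by (intro Z; rewrite Z in S; lra).
   assert (H1 : (k * U u0 + c1) * (- k * V u0 + c2) > 0).
   { assert (H2 : (k * U u0 + c1) * (- k * V u0 + c2) * (Derive U u0 * Derive V u0) =
        ((- k * V u0 + c2) * Derive U u0) * ((- k * V u0 + c2) * Derive U u0)).
     { replace ((k * U u0 + c1) * (- k * V u0 + c2) * (Derive U u0 * Derive V u0)) with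
        ((k * U u0 + c1) * Derive V u0 * ((- k * V u0 + c2) * Derive U u0)) by ring. rewrite E. ring. }
     assert (0 < ((- k * V u0 + c2) * Derive U u0) * ((- k * V u0 + c2) * Derive U u0)).
     { apply Rsqr_pos_lt. apply Rmult_integral_contrapositive_currified; auto. }
     destruct (Rlt_or_le 0 ((k * U u0 + c1) * (- k * V u0 + c2))) as [L|L]; auto. nra. }
   replace ((U u0 + c1 / k) * (V u0 - c2 / k)) with (- ((k * U u0 + c1) * (- k * V u0 + c2)) / (k*k)) by (field; auto).
   assert (0 < k * k) by (apply Rsqr_pos_lt; auto).
   apply Rdiv_neg_pos; auto. lra. }
 exists 1, (-1/K), (c1/k), (c2/(k*K)). split.
 - replace (1 * (-1 / K)) with (/ (- K)) by (field; lra). apply Rinv_0_lt_compat. lra.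
 - right; left. intros u Hu. specialize (HP u Hu). fold K in HP. unfold P in HP.
   replace ((1 * U u + c1 / k) * (-1 / K * V u + c2 / (k * K))) with
     (- ((U u + c1 / k) * (V u - c2 / k)) / K) by (field; lra).
   rewrite HP. field. lra.
Qed.

Lemma L_spiral a b U V k1 c1 k2 c2 : Rbar_lt a b -> C2 a b U -> C2 a b V -> SL a b U V ->
  Rel a b U V k1 c1 k2 c2 -> k1 <> 0 -> k2 <> 0 -> k1 <> k2 -> k1 <> - k2 -> model_out a b U V.
Proof. intros Hab HU HV HS HR Hk1 Hk2 H12 H12'.
 destruct (in_open_ex a b Hab) as [u0 Hu0].
 assert (Hno := L_no_origin a b U V k1 c1 k2 c2 HU HV HS HR H12).
 set (Xt := fun w => U w + c1/k1). set (Et := fun w => V w + c2/k2).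
 assert (HXt : forall w, in_open a b w -> Xt w <> 0).
 { intros w Hw. destruct (Hno w Hw) as [N _]. unfold Xt. intro Z. apply N.
   replace (k1 * U w + c1) with (k1 * (U w + c1/k1)) by (field; auto). rewrite Z; ring. }
 assert (HEt : forall w, in_open a b w -> Et w <> 0).
 { intros w Hw. destruct (Hno w Hw) as [_ N]. unfold Et. intro Z. apply N.
   replace (k2 * V w + c2) with (k2 * (V w + c2/k2)) by (field; auto). rewrite Z; ring. }
 assert (SX : forall w, in_open a b w -> Xt u0 * Xt w > 0).
 { intros w Hw. apply (sign_const a b Xt); auto. intros z Hz. destruct (HU z Hz). unfold Xt. auto_derive; auto. }
 assert (SE : forall w, in_open a b w -> Et u0 * Et w > 0).
 { intros w Hw. apply (sign_const a b Et); auto. intros z Hz. destruct (HV z Hz). unfold Et. auto_derive; auto. }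
 set (X0 := Xt u0). set (E0 := Et u0).
 assert (HXE : k1 * k2 * (X0 * E0) > 0).
 { assert (E := HR u0 Hu0). assert (S := HS u0 Hu0). 
   assert (U1 : Derive U u0 <> 0) by (intro Z; rewrite Z in S; lra).
   assert (E' : k1 * X0 * Derive V u0 = k2 * E0 * Derive U u0).
   { unfold X0, E0, Xt, Et. replace (k1 * (U u0 + c1 / k1)) with (k1 * U u0 + c1) by (field; auto).
     replace (k2 * (V u0 + c2 / k2)) with (k2 * V u0 + c2) by (field; auto). auto. }
   assert (H2 : k1 * k2 * (X0 * E0) * (Derive U u0 * Derive V u0) = (k2 * E0 * Derive U u0) * (k2 * E0 * Derive U u0)).
   { replace (k1 * k2 * (X0 * E0) * (Derive U u0 * Derive V u0)) with
       (k1 * X0 * Derive V u0 * (k2 * E0 * Derive U u0)) by ring. rewrite E'. ring. }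
   assert (0 < (k2 * E0 * Derive U u0) * (k2 * E0 * Derive U u0)).
   { apply Rsqr_pos_lt. apply Rmult_integral_contrapositive_currified; auto.
     apply Rmult_integral_contrapositive_currified; auto. apply HEt; auto. }
   destruct (Rlt_or_le 0 (k1 * k2 * (X0 * E0))) as [L|L]; auto. nra. }
 set (al := (k1 - k2)/(k1 + k2)).
 assert (Hs : k1 + k2 <> 0) by lra.
 assert (Ea1 : 1 + al = 2*k1/(k1+k2)) by (unfold al; field; auto).
 assert (Ea2 : 1 - al = 2*k2/(k1+k2)) by (unfold al; field; auto).
 assert (Na1 : 1 + al <> 0).
 { rewrite Ea1. unfold Rdiv. apply Rmult_integral_contrapositive_currified. lra. apply Rinv_neq_0_compat; auto. }
 assert (Na2 : 1 - al <> 0).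
 { rewrite Ea2. unfold Rdiv. apply Rmult_integral_contrapositive_currified. lra. apply Rinv_neq_0_compat; auto. }
 set (a1 := 1 + al) in *. set (a2 := 1 - al) in *.
 set (lam := (a1 * ln (a2*a2*(E0*E0)) - a2 * ln (a1*a1*(X0*X0))) / a2).
 set (A := a1 * X0 * exp lam). set (B := a2 * E0).
 assert (HX0 : X0 <> 0) by (apply HXt; auto).
 assert (HE0 : E0 <> 0) by (apply HEt; auto).
 assert (Hb1 : forall w, in_open a b w -> a1 * (A * Xt w) > 0).
 { intros w Hw. unfold A. replace (a1 * (a1 * X0 * exp lam * Xt w)) with ((a1*a1) * exp lam * (X0 * Xt w)) by ring.
   apply Rmult_lt_0_compat. apply Rmult_lt_0_compat. apply Rsqr_pos_lt; auto. apply exp_pos. apply SX; auto. }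
 assert (Hb2 : forall w, in_open a b w -> a2 * (B * Et w) > 0).
 { intros w Hw. unfold B. replace (a2 * (a2 * E0 * Et w)) with ((a2*a2) * (E0 * Et w)) by ring.
   apply Rmult_lt_0_compat. apply Rsqr_pos_lt; auto. apply SE; auto. }
 set (Phi := fun w => a2 * ln (a1 * (A * Xt w)) - a1 * ln (a2 * (B * Et w))).
 assert (HPhi0 : Phi u0 = 0).
 { unfold Phi. fold X0 E0. unfold A, B.
   replace (a1 * (a1 * X0 * exp lam * X0)) with ((a1*a1*(X0*X0)) * exp lam) by ring.
   replace (a2 * (a2 * E0 * E0)) with (a2*a2*(E0*E0)) by ring.
   rewrite ln_mult. rewrite ln_exp. unfold lam. field. auto.
   apply Rmult_lt_0_compat; apply Rsqr_pos_lt; auto. apply exp_pos. }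
 assert (HPhi : forall u, in_open a b u -> Phi u = 0).
 { intros u Hu. rewrite <- HPhi0. apply (const_I a b Phi); auto. intros w Hw.
   destruct (HU w Hw) as [HU1 _]. destruct (HV w Hw) as [HV1 _].
   assert (P1 := Hb1 w Hw). assert (P2 := Hb2 w Hw). assert (N1 := HXt w Hw). assert (N2 := HEt w Hw).
   unfold Phi, Xt, Et in *. auto_derive. repeat split; auto. etared.
   assert (E := HR w Hw).
   assert (HA : A <> 0). { intro Z. rewrite Z in P1. lra. }
   assert (HB : B <> 0). { intro Z. rewrite Z in P2. lra. }
   destruct (Hno w Hw) as [M1 M2].
   assert (E2 : Derive V w = (k2 * V w + c2) * Derive U w / (k1 * U w + c1)).
   { apply (Rmult_eq_reg_l (k1 * U w + c1)); auto. rewrite E. field. auto. }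
   rewrite E2. rewrite Ea1, Ea2. field. repeat split; auto. rewrite Rmult_comm; auto. }
 exists A, B, (A * (c1/k1)), (B * (c2/k2)). split.
 - unfold A, B. replace (a1 * X0 * exp lam * (a2 * E0)) with
     ((4 * (k1 * k2 * (X0 * E0)) * exp lam) / ((k1+k2)*(k1+k2))) by (unfold a1, a2 in *; rewrite Ea1, Ea2; field; auto).
   apply Rdiv_lt_0_compat. apply Rmult_lt_0_compat. lra. apply exp_pos. apply Rsqr_pos_lt; auto.
 - right; right; left. exists al. split. intro Z. apply Na2. unfold a2. rewrite Z. ring.
   split. intro Z. apply Na1. unfold a1. rewrite Z. ring.
   intros u Hu. assert (P1 := Hb1 u Hu). assert (P2 := Hb2 u Hu). assert (F := HPhi u Hu). unfold Phi in F.
   exists (Rpower (a1 * (A * Xt u)) (/ a1)). split. unfold Rpower. apply exp_pos.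
   fold a1 a2. rewrite !Rpower_mult. split.
   + rewrite Rinv_l; auto. rewrite Rpower_1; auto. unfold Xt. field. auto.
   + unfold Rpower. replace (/ a1 * a2 * ln (a1 * (A * Xt u))) with (ln (a2 * (B * Et u))).
     rewrite exp_ln; auto. unfold Et. field. auto.
     apply (Rmult_eq_reg_l a1); auto. replace (a1 * (/ a1 * a2 * ln (a1 * (A * Xt u)))) with (a2 * ln (a1 * (A * Xt u))) by (field; auto). lra.
Qed.

Lemma L_core1 a b U V k1 c1 k2 c2 : Rbar_lt a b -> C2 a b U -> C2 a b V -> SL a b U V ->
  Rel a b U V k1 c1 k2 c2 -> k1 <> 0 -> model_out a b U V.
Proof. intros Hab HU HV HS HR Hk1.
 destruct (Req_dec k2 0) as [E|E]. { subst. eapply L_exp; eauto. }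
 destruct (Req_dec k2 k1) as [E2|E2]. { subst. eapply L_lineB; eauto. }
 destruct (Req_dec k2 (-k1)) as [E3|E3]. { subst. eapply L_hyp; eauto. }
 eapply L_spiral; eauto. lra.
Qed.

Lemma L_core0 a b U V c1 c2 : Rbar_lt a b -> C2 a b U -> C2 a b V -> SL a b U V ->
  Rel a b U V 0 c1 0 c2 -> (c1 <> 0 \/ c2 <> 0) -> model_out a b U V.
Proof. intros Hab HU HV HS HR Hc.
 destruct (in_open_ex a b Hab) as [u0 Hu0].
 assert (Hc1 : c1 <> 0).
 { intro Z. subst. destruct Hc as [Hc|Hc]; [lra|]. assert (E := HR u0 Hu0). assert (S := HS u0 Hu0).
   assert (c2 * Derive U u0 = 0) by lra. apply Rmult_integral in H. destruct H; [lra|].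
   rewrite H in S; lra. }
 apply L_line; auto. exists (c2/c1). intros u Hu. assert (E := HR u Hu).
 apply (Rmult_eq_reg_l c1); auto. field_simplify; auto. lra.
Qed.

Lemma Rel_sym a b U V k1 c1 k2 c2 : Rel a b U V k1 c1 k2 c2 -> Rel a b V U k2 c2 k1 c1.
Proof. intros H u Hu. symmetry. apply H; auto. Qed.

Lemma SL_sym a b U V : SL a b U V -> SL a b V U.
Proof. intros H u Hu. rewrite Rmult_comm. apply H; auto. Qed.

Lemma L_core a b U V k1 c1 k2 c2 : Rbar_lt a b -> C2 a b U -> C2 a b V -> SL a b U V ->
  Rel a b U V k1 c1 k2 c2 -> (k1 <> 0 \/ k2 <> 0 \/ c1 <> 0 \/ c2 <> 0) ->
  model_out a b U V \/ model_out a b V U.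
Proof. intros Hab HU HV HS HR Hn.
 destruct (Req_dec k1 0) as [E1|E1].
 - destruct (Req_dec k2 0) as [E2|E2].
   + subst. left. apply (L_core0 a b U V c1 c2); auto. lra.
   + right. apply (L_core1 a b V U k2 c2 k1 c1); auto. apply SL_sym; auto. apply Rel_sym; auto.
 - left. eapply L_core1; eauto.
Qed.

Definition Slight (A B b1 b2 : R) (sw : bool) (P : R*R) : R*R :=
 let u := if sw then eta P else xi P in let v := if sw then xi P else eta P in
 ((A*u + b1 + (B*v + b2))/2, (A*u+b1 - (B*v+b2))/2).

Lemma xi_Slight A B b1 b2 sw P : xi (Slight A B b1 b2 sw P) = A*(if sw then eta P else xi P) + b1.
Proof. unfold xi at 1, Slight; simpl. field. Qed.
Lemma eta_Slight A B b1 b2 sw P : eta (Slight A B b1 b2 sw P) = B*(if sw then xi P else eta P) + b2.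
Proof. unfold eta at 1, Slight; simpl. field. Qed.

Lemma mink_boost p q v w : p*p - q*q = 1 ->
  mink (p * fst v + q * snd v, q * fst v + p * snd v) (p * fst w + q * snd w, q * fst w + p * snd w) = mink v w.
Proof. intros H. unfold mink; simpl.
 replace ((p * fst v + q * snd v) * (p * fst w + q * snd w) - (q * fst v + p * snd v) * (q * fst w + p * snd w))
  with ((p*p - q*q) * (fst v * fst w - snd v * snd w)) by ring. rewrite H; ring. Qed.

Lemma mink_boost' p q v w : p*p - q*q = 1 ->
  mink (p * fst v + q * snd v, -q * fst v + -p * snd v) (p * fst w + q * snd w, -q * fst w + -p * snd w) = mink v w.
Proof. intros H. unfold mink; simpl.
 replace ((p * fst v + q * snd v) * (p * fst w + q * snd w) - (-q * fst v + -p * snd v) * (-q * fst w + -p * snd w))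
  with ((p*p - q*q) * (fst v * fst w - snd v * snd w)) by ring. rewrite H; ring. Qed.

Lemma similarity_Slight A B b1 b2 sw : A * B > 0 -> similarity (Slight A B b1 b2 sw).
Proof. intros HAB. set (lam := sqrt (A*B)).
 assert (Hl : 0 < lam) by (apply sqrt_lt_R0; auto).
 assert (Hl2 : lam * lam = A * B) by (apply sqrt_sqrt; lra).
 assert (Hpq : ((A+B)/(2*lam)) * ((A+B)/(2*lam)) - ((A-B)/(2*lam)) * ((A-B)/(2*lam)) = 1).
 { replace (((A+B)/(2*lam)) * ((A+B)/(2*lam)) - ((A-B)/(2*lam)) * ((A-B)/(2*lam))) with ((A*B)/(lam*lam)) by (field; lra).
   rewrite Hl2. field. split; intro Z; rewrite Z in HAB; lra. }
 destruct sw.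
 - exists lam, ((A+B)/(2*lam)), ((B-A)/(2*lam)), (-((B-A)/(2*lam))), (-((A+B)/(2*lam))), ((b1+b2)/2), ((b1-b2)/2).
   split; auto. split.
   + intros v w. apply mink_boost'. replace ((B - A) / (2 * lam) * ((B - A) / (2 * lam))) with ((A - B) / (2 * lam) * ((A - B) / (2 * lam))) by (field; lra). auto.
   + intros [x y]. unfold Slight, xi, eta; simpl. f_equal; field; lra.
 - exists lam, ((A+B)/(2*lam)), ((A-B)/(2*lam)), ((A-B)/(2*lam)), ((A+B)/(2*lam)), ((b1+b2)/2), ((b1-b2)/2).
   split; auto. split.
   + intros v w. apply mink_boost. auto.
   + intros [x y]. unfold Slight, xi, eta; simpl. f_equal; field; lra.
Qed.

Definition Goal4 a b (X : R -> R * R) := exists S : R * R -> R * R, similarity S /\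
     ((forall u, in_open a b u -> on_line (S (X u))) \/
      (forall u, in_open a b u -> on_hyperbola (S (X u))) \/
      (exists alpha : R, alpha <> 1 /\ alpha <> -1 /\
         forall u, in_open a b u -> on_spiral alpha (S (X u))) \/
      (forall u, in_open a b u -> on_exp_curve (S (X u)))).

Lemma L_final a b (X : R -> R * R) (sw : bool) : model_out a b (fun u : R => if sw then eta (X u) else xi (X u))
   (fun u : R => if sw then xi (X u) else eta (X u)) -> Goal4 a b X.
Proof. intros [A [B [b1 [b2 [HAB H]]]]].
 exists (Slight A B b1 b2 sw). split. apply similarity_Slight; auto.
 destruct H as [H|[H|[H|H]]].
 - left. intros u Hu. specialize (H u Hu). unfold on_line.
   cbv beta in H. unfold Slight; simpl. rewrite H. field.
 - right; left. intros u Hu. specialize (H u Hu). unfold on_hyperbola.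
   rewrite xi_Slight, eta_Slight. auto.
 - right; right; left. destruct H as [al [H1 [H2 H3]]]. exists al. split; auto. split; auto.
   intros u Hu. destruct (H3 u Hu) as [s [Hs [E1 E2]]]. exists s. split; auto.
   rewrite xi_Slight, eta_Slight. auto.
 - right; right; right. intros u Hu. specialize (H u Hu). unfold on_exp_curve.
   rewrite xi_Slight, eta_Slight. auto.
Qed.

Lemma motion_fst f g H P s : fst (motion f g H P s) = g s * ((exp (f s) + exp (- f s))/2 * fst P + (exp (f s) - exp (- f s))/2 * snd P) + fst (H s).
Proof. reflexivity. Qed.
Lemma motion_snd f g H P s : snd (motion f g H P s) = g s * ((exp (f s) + exp (- f s))/2 * snd P + (exp (f s) - exp (- f s))/2 * fst P) + snd (H s).
Proof. reflexivity. Qed.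

Lemma dV (f g H1 : R -> R) x y t : ex_derive f t -> ex_derive g t -> ex_derive H1 t ->
  is_derive (fun s => g s * ((exp (f s) + exp (- f s))/2 * x + (exp (f s) - exp (- f s))/2 * y) + H1 s) t
   (Derive g t * ((exp (f t) + /exp (f t))/2 * x + (exp (f t) - /exp (f t))/2 * y) +
    g t * (Derive f t * (exp (f t) - /exp (f t))/2 * x + Derive f t * (exp (f t) + /exp (f t))/2 * y) + Derive H1 t).
Proof. intros. auto_derive. repeat split; auto. etared. rewrite exp_Ropp. field.
 apply Rgt_not_eq, exp_pos. Qed.

Lemma dT (X1 X2 : R -> R) c0 c1 c2 k u : ex_derive X1 u -> ex_derive X2 u ->
  is_derive (fun s => c0 * (c1 * X1 s + c2 * X2 s) + k) u (c0 * (c1 * Derive X1 u + c2 * Derive X2 u)).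
Proof. intros. auto_derive. repeat split; auto. etared. ring. Qed.

Lemma key_inv (X : R -> R*R) (f g : R -> R) (H : R -> R * R) (u t : R) :
  ex_derive (fun s => fst (X s)) u -> ex_derive (fun s => snd (X s)) u ->
  ex_derive f t -> ex_derive g t -> ex_derive (fun s => fst (H s)) t -> ex_derive (fun s => snd (H s)) t ->
  g t <> 0 ->
  (Derive (fun s => fst (X s)) u + Derive (fun s => snd (X s)) u) *
  (Derive (fun s => fst (X s)) u - Derive (fun s => snd (X s)) u) > 0 ->
  (mink (Derive (fun s => fst (motion f g H (X u) s)) t, Derive (fun s => snd (motion f g H (X u) s)) t)
        (unit_normal (dcurve (fun s => motion f g H (X s) t) u)) = 0 <->
   ((Derive g t + g t * Derive f t) * g t * xi (X u) + (Derive (fun s => fst (H s)) t + Derive (fun s => snd (H s)) t) * g t / exp (f t)) *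
     (Derive (fun s => fst (X s)) u - Derive (fun s => snd (X s)) u) =
   ((Derive g t - g t * Derive f t) * g t * eta (X u) + (Derive (fun s => fst (H s)) t - Derive (fun s => snd (H s)) t) * g t * exp (f t)) *
     (Derive (fun s => fst (X s)) u + Derive (fun s => snd (X s)) u)).
Proof. intros HX1 HX2 Hf Hg HH1 HH2 Hg0 HS.
 set (D1 := Derive (fun s => fst (X s)) u) in *. set (D2 := Derive (fun s => snd (X s)) u) in *.
 set (dg := Derive g t). set (df := Derive f t). 
 set (dH1 := Derive (fun s => fst (H s)) t). set (dH2 := Derive (fun s => snd (H s)) t).
 set (E := exp (f t)). assert (HE : 0 < E) by apply exp_pos.
 assert (HEi : exp (- f t) = / E) by (unfold E; apply exp_Ropp).
 set (x := fst (X u)). set (y := snd (X u)).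
 assert (V1 : Derive (fun s => fst (motion f g H (X u) s)) t =
   dg * ((E + /E)/2 * x + (E - /E)/2 * y) + g t * (df * (E - /E)/2 * x + df * (E + /E)/2 * y) + dH1).
 { apply is_derive_unique. apply (is_derive_ext (fun s => g s * ((exp (f s) + exp (- f s))/2 * fst (X u) + (exp (f s) - exp (- f s))/2 * snd (X u)) + fst (H s))).
   intros s; rewrite motion_fst; reflexivity.
   apply (dV f g (fun s => fst (H s))); auto. }
 assert (V2 : Derive (fun s => snd (motion f g H (X u) s)) t =
   dg * ((E + /E)/2 * y + (E - /E)/2 * x) + g t * (df * (E - /E)/2 * y + df * (E + /E)/2 * x) + dH2).
 { apply is_derive_unique. apply (is_derive_ext (fun s => g s * ((exp (f s) + exp (- f s))/2 * snd (X u) + (exp (f s) - exp (- f s))/2 * fst (X u)) + snd (H s))).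
   intros s; rewrite motion_snd; reflexivity.
   apply (dV f g (fun s => snd (H s))); auto. }
 assert (T1 : Derive (fun s => fst (motion f g H (X s) t)) u = g t * ((E + /E)/2 * D1 + (E - /E)/2 * D2)).
 { apply is_derive_unique. apply (is_derive_ext (fun s => g t * ((exp (f t) + exp (- f t))/2 * fst (X s) + (exp (f t) - exp (- f t))/2 * snd (X s)) + fst (H t))).
   intros s; rewrite motion_fst; reflexivity.
   rewrite <- HEi. apply (dT (fun s => fst (X s)) (fun s => snd (X s))); auto. }
 assert (T2 : Derive (fun s => snd (motion f g H (X s) t)) u = g t * ((E + /E)/2 * D2 + (E - /E)/2 * D1)).
 { apply is_derive_unique. apply (is_derive_ext (fun s => g t * ((exp (f t) + exp (- f t))/2 * snd (X s) + (exp (f t) - exp (- f t))/2 * fst (X s)) + snd (H t))).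
   intros s; rewrite motion_snd; reflexivity.
   rewrite <- HEi. apply (dT (fun s => snd (X s)) (fun s => fst (X s))); auto. }
 rewrite V1, V2. unfold dcurve. rewrite T1, T2. unfold unit_normal. unfold mink. cbn [fst snd].
 set (n := sqrt _).
 assert (Hn : 0 < n).
 { unfold n. apply sqrt_lt_R0. 
   replace (g t * ((E + / E) / 2 * D1 + (E - / E) / 2 * D2) * (g t * ((E + / E) / 2 * D1 + (E - / E) / 2 * D2)) -
     g t * ((E + / E) / 2 * D2 + (E - / E) / 2 * D1) * (g t * ((E + / E) / 2 * D2 + (E - / E) / 2 * D1)))
   with ((g t * g t) * ((D1 + D2) * (D1 - D2))) by (field; lra).
   apply Rmult_lt_0_compat; auto. apply Rsqr_pos_lt; auto. }
 unfold xi, eta. fold x y. 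
 match goal with |- (?L = 0 <-> _) => set (LHS := L) end.
 assert (EQ : LHS = (((dg - g t * df) * g t * (x - y) + (dH1 - dH2) * g t * E) * (D1 + D2) -
     ((dg + g t * df) * g t * (x + y) + (dH1 + dH2) * g t / E) * (D1 - D2)) / (2 * n)).
 { unfold LHS. field. lra. }
 rewrite EQ. split; intro Z.
 - assert (Z2 : ((dg - g t * df) * g t * (x - y) + (dH1 - dH2) * g t * E) * (D1 + D2) -
     ((dg + g t * df) * g t * (x + y) + (dH1 + dH2) * g t / E) * (D1 - D2) = 0).
   { apply (Rmult_eq_reg_r (/ (2*n))). rewrite Rmult_0_l. exact Z. apply Rinv_neq_0_compat. lra. }
   lra.
 - rewrite Z. unfold Rdiv. ring.
Qed.

Section Curve.
Lemma curve_facts a b X : space_like_curve a b X ->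
  C2 a b (fun u => xi (X u)) /\ C2 a b (fun u => eta (X u)) /\
  (forall u, in_open a b u -> ex_derive (fun s => fst (X s)) u /\ ex_derive (fun s => snd (X s)) u /\
     Derive (fun u => xi (X u)) u = Derive (fun s => fst (X s)) u + Derive (fun s => snd (X s)) u /\
     Derive (fun u => eta (X u)) u = Derive (fun s => fst (X s)) u - Derive (fun s => snd (X s)) u) /\
  SL a b (fun u => xi (X u)) (fun u => eta (X u)).
Proof. intros [Hab [Hn Hm]].
 assert (D1 : forall u, in_open a b u -> ex_derive (fun s => fst (X s)) u /\ ex_derive (fun s => snd (X s)) u).
 { intros u Hu. destruct (Hn 1%nat u Hu) as [A B]. split; auto. }
 assert (D2 : forall u, in_open a b u -> ex_derive (Derive (fun s => fst (X s))) u /\ ex_derive (Derive (fun s => snd (X s))) u).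
 { intros u Hu. destruct (Hn 2%nat u Hu) as [A B]. split; auto. }
 assert (DP : forall u, in_open a b u ->
     Derive (fun u => xi (X u)) u = Derive (fun s => fst (X s)) u + Derive (fun s => snd (X s)) u /\
     Derive (fun u => eta (X u)) u = Derive (fun s => fst (X s)) u - Derive (fun s => snd (X s)) u).
 { intros u Hu. destruct (D1 u Hu). unfold xi, eta. split.
   apply (Derive_plus (fun s => fst (X s)) (fun s => snd (X s))); auto.
   apply (Derive_minus (fun s => fst (X s)) (fun s => snd (X s))); auto. }
 split; [|split; [|split]].
 - intros u Hu. destruct (D1 u Hu). destruct (D2 u Hu). split.
   + unfold xi. apply (ex_derive_plus (fun s => fst (X s)) (fun s => snd (X s))); auto.
   + apply (ex_derive_ext_loc (fun w => Derive (fun s => fst (X s)) w + Derive (fun s => snd (X s)) w)).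
     apply (filter_imp (in_open a b)). intros w Hw. symmetry; apply DP; auto. apply in_open_loc; auto.
     apply (ex_derive_plus (Derive (fun s => fst (X s))) (Derive (fun s => snd (X s)))); auto.
 - intros u Hu. destruct (D1 u Hu). destruct (D2 u Hu). split.
   + unfold eta. apply (ex_derive_minus (fun s => fst (X s)) (fun s => snd (X s))); auto.
   + apply (ex_derive_ext_loc (fun w => Derive (fun s => fst (X s)) w - Derive (fun s => snd (X s)) w)).
     apply (filter_imp (in_open a b)). intros w Hw. symmetry; apply DP; auto. apply in_open_loc; auto.
     apply (ex_derive_minus (Derive (fun s => fst (X s))) (Derive (fun s => snd (X s)))); auto.
 - intros u Hu. destruct (D1 u Hu). destruct (DP u Hu). auto.
 - intros u Hu. destruct (DP u Hu) as [E1 E2]. rewrite E1, E2. specialize (Hm u Hu).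
   unfold mink, dcurve in Hm; simpl in Hm. nra.
Qed.
End Curve.

Lemma lorentz p q r s : (forall v w : R * R,
       mink (p * fst v + q * snd v, r * fst v + s * snd v)
            (p * fst w + q * snd w, r * fst w + s * snd w) = mink v w) ->
  p * p - r * r = 1 /\ ((s = p /\ q = r) \/ (s = -p /\ q = -r)).
Proof. intros H.
 assert (H1 := H (1,0) (1,0)). assert (H2 := H (0,1) (0,1)). assert (H3 := H (1,0) (0,1)).
 unfold mink in *; simpl in *.
 assert (E1 : p*p - r*r = 1) by lra. assert (E2 : q*q - s*s = -1) by lra. assert (E3 : p*q = r*s) by lra.
 split; auto.
 assert (Hp : p <> 0) by (intro Z; subst; nra).
 assert (Es : s*s = p*p).
 { assert (p*p*(q*q) = r*r*(s*s)) by (rewrite <- !Rmult_assoc; 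
      replace (p*p*q*q) with ((p*q)*(p*q)) by ring; rewrite E3; ring). nra. }
 assert (Hs : s = p \/ s = -p) by (assert ((s-p)*(s+p) = 0) by nra; apply Rmult_integral in H0; destruct H0; [left|right]; lra).
 destruct Hs as [Hs|Hs]; subst s.
 - left; split; auto. apply (Rmult_eq_reg_l p); auto. lra.
 - right; split; auto. apply (Rmult_eq_reg_l p); auto. lra.
Qed.

Definition NZ (k1 c1 k2 c2 : R) := k1 <> 0 \/ k2 <> 0 \/ c1 <> 0 \/ c2 <> 0.

Lemma MR_line a b U V A B b1 b2 : (forall u, in_open a b u -> ex_derive U u /\ ex_derive V u) ->
  A <> 0 -> (forall u, in_open a b u -> A * U u + b1 = B * V u + b2) ->
  exists k1 c1 k2 c2, NZ k1 c1 k2 c2 /\ Rel a b U V k1 c1 k2 c2.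
Proof. intros HD HA HM. exists 0, B, 0, A. split. right; right; right; auto.
 intros u Hu. destruct (HD u Hu).
 assert (Z : A * Derive U u - B * Derive V u = 0).
 { apply (zero_deriv a b (fun w => A * U w + b1 - (B * V w + b2)) u); auto.
   intros w Hw. rewrite HM; auto. ring. auto_derive. repeat split; auto. etared. ring. }
 lra. Qed.

Lemma MR_hyp a b U V A B b1 b2 : (forall u, in_open a b u -> ex_derive U u /\ ex_derive V u) ->
  A * B <> 0 -> (forall u, in_open a b u -> (A * U u + b1) * (B * V u + b2) = -1) ->
  exists k1 c1 k2 c2, NZ k1 c1 k2 c2 /\ Rel a b U V k1 c1 k2 c2.
Proof. intros HD HA HM. exists (A*B), (B*b1), (-(A*B)), (-(A*b2)). split. left; auto.
 intros u Hu. destruct (HD u Hu).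
 assert (Z : A * Derive U u * (B * V u + b2) + (A * U u + b1) * (B * Derive V u) = 0).
 { apply (zero_deriv a b (fun w => (A * U w + b1) * (B * V w + b2) + 1) u); auto.
   intros w Hw. rewrite HM; auto. ring. auto_derive. repeat split; auto. etared. ring. }
 lra. Qed.

Lemma MR_exp a b U V A B b1 b2 : (forall u, in_open a b u -> ex_derive U u /\ ex_derive V u) ->
  A * B <> 0 -> (forall u, in_open a b u -> A * U u + b1 = exp (2 * (B * V u + b2))) ->
  exists k1 c1 k2 c2, NZ k1 c1 k2 c2 /\ Rel a b U V k1 c1 k2 c2.
Proof. intros HD HA HM. exists (2*(A*B)), (2*(B*b1)), 0, A. split. left; lra.
 intros u Hu. destruct (HD u Hu).
 assert (Z : A * Derive U u - 2 * (B * Derive V u) * exp (2 * (B * V u + b2)) = 0).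
 { apply (zero_deriv a b (fun w => A * U w + b1 - exp (2 * (B * V w + b2))) u); auto.
   intros w Hw. rewrite HM; auto. ring. auto_derive. repeat split; auto. etared. ring. }
 rewrite <- HM in Z; auto. lra. Qed.

Lemma MR_spiral a b U V A B b1 b2 al : (forall u, in_open a b u -> ex_derive U u /\ ex_derive V u) ->
  A * B <> 0 -> al <> 1 -> al <> -1 -> 
  (forall u, in_open a b u -> exists s, s > 0 /\
     A*U u + b1 = Rpower s (1+al)/(1+al) /\ B * V u + b2 = Rpower s (1-al)/(1-al)) ->
  exists k1 c1 k2 c2, NZ k1 c1 k2 c2 /\ Rel a b U V k1 c1 k2 c2.
Proof. intros HD HA H1 H2 HM.
 assert (N1 : 1 + al <> 0) by lra. assert (N2 : 1 - al <> 0) by lra.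
 exists ((1+al)*(A*B)), ((1+al)*(B*b1)), ((1-al)*(A*B)), ((1-al)*(A*b2)). split.
 left. apply Rmult_integral_contrapositive_currified; auto.
 assert (P : forall u, in_open a b u -> (1+al) * (A * U u + b1) > 0 /\ (1-al) * (B * V u + b2) > 0 /\
   (1-al) * ln ((1+al) * (A * U u + b1)) - (1+al) * ln ((1-al) * (B * V u + b2)) = 0).
 { intros u Hu. destruct (HM u Hu) as [s [Hs [E1 E2]]]. rewrite E1, E2.
   replace ((1 + al) * (Rpower s (1 + al) / (1 + al))) with (Rpower s (1+al)) by (field; auto).
   replace ((1 - al) * (Rpower s (1 - al) / (1 - al))) with (Rpower s (1-al)) by (field; auto).
   unfold Rpower. rewrite !ln_exp. split. apply exp_pos. split. apply exp_pos. ring. }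
 intros u Hu. destruct (HD u Hu). destruct (P u Hu) as [Q1 [Q2 _]].
 assert (Z : (1-al) * ((1+al) * (A * Derive U u)) / ((1+al) * (A * U u + b1))
    - (1+al) * ((1-al) * (B * Derive V u)) / ((1-al) * (B * V u + b2)) = 0).
 { apply (zero_deriv a b (fun w => (1-al) * ln ((1+al) * (A * U w + b1)) - (1+al) * ln ((1-al) * (B * V w + b2))) u); auto.
   intros w Hw. destruct (P w Hw) as [_ [_ R]]. auto.
   auto_derive. repeat split; auto. etared. unfold Rdiv. ring. }
 assert (Q1' : A * U u + b1 <> 0) by (intro Zr; rewrite Zr in Q1; lra).
 assert (Q2' : B * V u + b2 <> 0) by (intro Zr; rewrite Zr in Q2; lra).
 assert (Z2 : (1-al) * (A * Derive U u) * (B * V u + b2) - (1+al) * (B * Derive V u) * (A * U u + b1) = 0).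
 { replace ((1-al) * (A * Derive U u) * (B * V u + b2) - (1+al) * (B * Derive V u) * (A * U u + b1))
   with (((1-al) * ((1+al) * (A * Derive U u)) / ((1+al) * (A * U u + b1))
    - (1+al) * ((1-al) * (B * Derive V u)) / ((1-al) * (B * V u + b2))) * ((A * U u + b1) * (B * V u + b2))) by (field; auto).
   rewrite Z. ring. }
 lra.
Qed.

Definition phi (k t : R) := if Req_EM_T k 0 then t else (exp (k*t) - 1)/k.

Lemma phi_der k t : is_derive (phi k) t (exp (k*t)).
Proof. unfold phi. destruct (Req_EM_T k 0) as [E|E].
 - subst. replace (exp (0*t)) with 1. auto_derive; auto. rewrite Rmult_0_l, exp_0; auto.
 - auto_derive; auto. field; auto. Qed.

Lemma phi0 k : phi k 0 = 0.
Proof. unfold phi. destruct (Req_EM_T k 0); auto. rewrite Rmult_0_r, exp_0. field; auto. Qed.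

Lemma build a b X k1 c1 k2 c2 : space_like_curve a b X -> NZ k1 c1 k2 c2 ->
  Rel a b (fun u => xi (X u)) (fun u => eta (X u)) k1 c1 k2 c2 -> invariant_nontrivial a b X.
Proof. intros Hsl Hnz HR.
 destruct (curve_facts a b X Hsl) as [_ [_ [HD HS]]].
 set (g := fun t => exp ((k1+k2)/2 * t)). set (f := fun t => (k1-k2)/2 * t).
 set (H := fun t => ((c1 * phi k1 t + c2 * phi k2 t)/2, (c1 * phi k1 t - c2 * phi k2 t)/2)).
 assert (Dg : forall t, is_derive g t ((k1+k2)/2 * g t)).
 { intros t. unfold g. auto_derive; auto. ring. }
 assert (Df : forall t, is_derive f t ((k1-k2)/2)).
 { intros t. unfold f. auto_derive; auto. ring. }
 assert (DH1 : forall t, is_derive (fun s => fst (H s)) t ((c1 * exp (k1*t) + c2 * exp (k2*t))/2)).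
 { intros t. change (is_derive (fun s => (c1 * phi k1 s + c2 * phi k2 s)/2) t ((c1 * exp (k1*t) + c2 * exp (k2*t))/2)).
   assert (P1 := phi_der k1 t). assert (P2 := phi_der k2 t).
   auto_derive. repeat split; eexists; eauto. etared.
   rewrite (is_derive_unique _ _ _ P1), (is_derive_unique _ _ _ P2). field. }
 assert (DH2 : forall t, is_derive (fun s => snd (H s)) t ((c1 * exp (k1*t) - c2 * exp (k2*t))/2)).
 { intros t. change (is_derive (fun s => (c1 * phi k1 s - c2 * phi k2 s)/2) t ((c1 * exp (k1*t) - c2 * exp (k2*t))/2)).
   assert (P1 := phi_der k1 t). assert (P2 := phi_der k2 t).
   auto_derive. repeat split; eexists; eauto. etared.
   rewrite (is_derive_unique _ _ _ P1), (is_derive_unique _ _ _ P2). field. }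
 exists m_infty, p_infty, f, g, H. split; [|split].
 - split; [split; simpl; auto|]. split.
   + intros t _. repeat split; eexists; eauto.
   + split. unfold f; ring. split. unfold g. rewrite Rmult_0_r. apply exp_0.
     unfold H. rewrite !phi0. f_equal; field.
 - exists 1. split. split; simpl; auto.
   destruct (Req_dec k1 k2) as [E|E].
   + subst k2. destruct (Req_dec k1 0) as [E0|E0].
     * subst k1. right; right. unfold H. unfold phi. destruct (Req_EM_T 0 0) as [_|C]; [|lra].
       intro Z. injection Z. intros Z1 Z2. destruct Hnz as [C|[C|[C|C]]]; lra.
     * right; left. unfold g. intro Z. 
       replace ((k1 + k1) / 2 * 1) with k1 in Z by field.
       assert (k1 = 0). { rewrite <- exp_0 in Z. apply exp_inv in Z; auto. } lra.
   + left. unfold f. intro Z. apply E. lra.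
 - intros u t Hu Ht. destruct (HD u Hu) as [HX1 [HX2 [E1 E2]]].
   assert (Hg0 : g t <> 0) by (apply Rgt_not_eq, exp_pos).
   apply (proj2 (key_inv X f g H u t HX1 HX2 (ex_intro _ _ (Df t)) (ex_intro _ _ (Dg t))
      (ex_intro _ _ (DH1 t)) (ex_intro _ _ (DH2 t)) Hg0 ltac:(rewrite <- E1, <- E2; apply HS; auto))).
   assert (e1 : Derive g t = (k1+k2)/2 * g t) by (apply is_derive_unique; apply Dg).
   assert (e2 : Derive f t = (k1-k2)/2) by (apply is_derive_unique; apply Df).
   assert (e3 : Derive (fun s : R => fst (H s)) t = (c1 * exp (k1*t) + c2 * exp (k2*t))/2) by (apply is_derive_unique; apply DH1).
   assert (e4 : Derive (fun s : R => snd (H s)) t = (c1 * exp (k1*t) - c2 * exp (k2*t))/2) by (apply is_derive_unique; apply DH2).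
   rewrite e1, e2, e3, e4.
   rewrite <- E1, <- E2. assert (R := HR u Hu). cbv beta in R.
   set (G := g t). set (Ef := exp (f t)).
   assert (HG : G > 0) by apply exp_pos. assert (HEf : Ef > 0) by apply exp_pos.
   assert (X1 : exp (k1 * t) = G * Ef).
   { unfold G, Ef, g, f. rewrite <- exp_plus. f_equal. field. }
   assert (X2 : exp (k2 * t) = G / Ef).
   { unfold G, Ef, g, f. unfold Rdiv. rewrite <- exp_Ropp, <- exp_plus. f_equal. field. }
   rewrite X1, X2.
   replace (((k1 + k2) / 2 * G + G * ((k1 - k2) / 2)) * G * xi (X u) +
     ((c1 * (G * Ef) + c2 * (G / Ef)) / 2 + (c1 * (G * Ef) - c2 * (G / Ef)) / 2) * G / Ef)
   with (G * G * (k1 * xi (X u) + c1)) by (field; lra).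
   replace (((k1 + k2) / 2 * G - G * ((k1 - k2) / 2)) * G * eta (X u) +
     ((c1 * (G * Ef) + c2 * (G / Ef)) / 2 - (c1 * (G * Ef) - c2 * (G / Ef)) / 2) * G * Ef)
   with (G * G * (k2 * eta (X u) + c2)) by (field; lra).
   rewrite !Rmult_assoc. rewrite R. ring.
Qed.

Lemma back_gen a b (X : R -> R * R) (S : R * R -> R * R) (U V : R -> R) A B b1 b2 :
  (forall u, in_open a b u -> ex_derive U u /\ ex_derive V u) -> A * B <> 0 ->
  (forall u, in_open a b u -> xi (S (X u)) = A * U u + b1) ->
  (forall u, in_open a b u -> eta (S (X u)) = B * V u + b2) ->
     ((forall u, in_open a b u -> on_line (S (X u))) \/
      (forall u, in_open a b u -> on_hyperbola (S (X u))) \/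
      (exists alpha : R, alpha <> 1 /\ alpha <> -1 /\
         forall u, in_open a b u -> on_spiral alpha (S (X u))) \/
      (forall u, in_open a b u -> on_exp_curve (S (X u)))) ->
  exists k1 c1 k2 c2, NZ k1 c1 k2 c2 /\ Rel a b U V k1 c1 k2 c2.
Proof. intros HD HAB Hx He Hc.
 assert (HA : A <> 0) by (intro Z; apply HAB; rewrite Z; ring).
 destruct Hc as [Hc|[Hc|[Hc|Hc]]].
 - apply (MR_line a b U V A B b1 b2); auto. intros u Hu. rewrite <- Hx, <- He; auto.
   specialize (Hc u Hu). unfold on_line in Hc. revert Hc. unfold xi, eta. intro; lra.
 - apply (MR_hyp a b U V A B b1 b2); auto. intros u Hu. rewrite <- Hx, <- He; auto. apply Hc; auto.
 - destruct Hc as [al [H1 [H2 H3]]]. apply (MR_spiral a b U V A B b1 b2 al); auto.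
   intros u Hu. destruct (H3 u Hu) as [s [Hs [E1 E2]]]. exists s. rewrite <- Hx, <- He; auto.
 - apply (MR_exp a b U V A B b1 b2); auto. intros u Hu. rewrite <- Hx, <- He; auto. apply Hc; auto.
Qed.

Lemma NZ_sym k1 c1 k2 c2 : NZ k1 c1 k2 c2 -> NZ k2 c2 k1 c1.
Proof. unfold NZ; tauto. Qed.

Theorem theorem11p4 (a b : Rbar) (X : R -> R * R) :
  space_like_curve a b X ->
  (invariant_nontrivial a b X <->
   exists S : R * R -> R * R, similarity S /\
     ((forall u, in_open a b u -> on_line (S (X u))) \/
      (forall u, in_open a b u -> on_hyperbola (S (X u))) \/
      (exists alpha : R, alpha <> 1 /\ alpha <> -1 /\
         forall u, in_open a b u -> on_spiral alpha (S (X u))) \/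
      (forall u, in_open a b u -> on_exp_curve (S (X u))))).
Proof. intros Hsl.
 destruct (curve_facts a b X Hsl) as [CU [CV [HD HS]]].
 assert (Hab : Rbar_lt a b) by (destruct Hsl; auto).
 split.
 - intros [c [d [f [g [H [[Hin0 [Hdiff [Hf0 [Hg0 HH0]]]] [Hnt Hinv]]]]]]].
   destruct (classic (exists t, in_open c d t /\ g t <> 0 /\ ~ (Derive g t = 0 /\ Derive f t = 0 /\
      Derive (fun s => fst (H s)) t = 0 /\ Derive (fun s => snd (H s)) t = 0))) as [[t [Ht [Hg Hnz]]] | Hno].
   + destruct (Hdiff t Ht) as [Df [Dg [DH1 DH2]]].
     set (k1 := (Derive g t + g t * Derive f t) * g t).
     set (k2 := (Derive g t - g t * Derive f t) * g t).
     set (c1 := (Derive (fun s => fst (H s)) t + Derive (fun s => snd (H s)) t) * g t / exp (f t)).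
     set (c2 := (Derive (fun s => fst (H s)) t - Derive (fun s => snd (H s)) t) * g t * exp (f t)).
     assert (HR : Rel a b (fun u => xi (X u)) (fun u => eta (X u)) k1 c1 k2 c2).
     { intros u Hu. destruct (HD u Hu) as [HX1 [HX2 [E1 E2]]].
       assert (K := proj1 (key_inv X f g H u t HX1 HX2 Df Dg DH1 DH2 Hg ltac:(rewrite <- E1, <- E2; apply HS; auto))
          (Hinv u t Hu Ht)).
       rewrite E1, E2. exact K. }
     assert (HN : NZ k1 c1 k2 c2).
     { destruct (classic (NZ k1 c1 k2 c2)) as [N|N]; auto. exfalso. apply Hnz.
       unfold NZ in N. assert (z1 : k1 = 0) by (apply NNPP; tauto). assert (z2 : k2 = 0) by (apply NNPP; tauto).
       assert (z3 : c1 = 0) by (apply NNPP; tauto). assert (z4 : c2 = 0) by (apply NNPP; tauto).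
       unfold k1, k2, c1, c2 in *. assert (HE := exp_pos (f t)).
       apply Rmult_integral in z1. apply Rmult_integral in z2. 
       destruct z1 as [z1|z1]; [|contradiction]. destruct z2 as [z2|z2]; [|contradiction].
       assert (w3 : Derive (fun s => fst (H s)) t + Derive (fun s => snd (H s)) t = 0).
       { unfold Rdiv in z3. apply Rmult_integral in z3. destruct z3 as [z3|z3].
         apply Rmult_integral in z3. destruct z3; [auto|contradiction].
         exfalso. apply (Rinv_neq_0_compat (exp (f t))); lra. }
       assert (w4 : Derive (fun s => fst (H s)) t - Derive (fun s => snd (H s)) t = 0).
       { apply Rmult_integral in z4. destruct z4 as [z4|z4]; [|lra].
         apply Rmult_integral in z4. destruct z4; [auto|contradiction]. }
       assert (w2 : g t * Derive f t = 0) by lra.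
       apply Rmult_integral in w2. destruct w2 as [w2|w2]; [contradiction|].
       repeat split; lra. }
     destruct (L_core a b _ _ k1 c1 k2 c2 Hab CU CV HS HR HN) as [M|M].
     * apply (L_final a b X false). exact M.
     * apply (L_final a b X true). exact M.
   + exfalso. 
     assert (Hall : forall t, in_open c d t -> g t <> 0 -> Derive g t = 0 /\ Derive f t = 0 /\
        Derive (fun s => fst (H s)) t = 0 /\ Derive (fun s => snd (H s)) t = 0).
     { intros t Ht Hg. apply NNPP. intro N. apply Hno. exists t; auto. }
     assert (Hgg : forall t, in_open c d t -> g t * g t = 1).
     { intros t Ht. replace 1 with (g 0 * g 0) by (rewrite Hg0; ring).
       apply (const_I c d (fun s => g s * g s)); auto. intros w Hw.
       destruct (Hdiff w Hw) as [_ [Dg _]].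
       replace 0 with (2 * g w * Derive g w).
       auto_derive; auto. etared. ring.
       destruct (Req_dec (g w) 0) as [Z|Z]. rewrite Z; ring. destruct (Hall w Hw Z) as [Z2 _]. rewrite Z2; ring. }
     assert (Hgn : forall t, in_open c d t -> g t <> 0).
     { intros t Ht Z. specialize (Hgg t Ht). rewrite Z in Hgg. lra. }
     assert (C : forall (F : R -> R) t, in_open c d t -> (forall w, in_open c d w -> ex_derive F w /\ Derive F w = 0) -> F t = F 0).
     { intros F t Ht HF. apply (const_I c d F); auto. intros w Hw. destruct (HF w Hw) as [E1 E2].
       rewrite <- E2. apply Derive_correct; auto. }
     destruct Hnt as [t [Ht Hne]].
     assert (Ft : f t = 0).
     { rewrite <- Hf0. apply C; auto. intros w Hw. split. apply (Hdiff w Hw). apply (Hall w Hw (Hgn w Hw)). }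
     assert (Gt : g t = 1).
     { rewrite <- Hg0. apply C; auto. intros w Hw. split. apply (Hdiff w Hw). apply (Hall w Hw (Hgn w Hw)). }
     assert (H1t : fst (H t) = 0).
     { replace 0 with (fst (H 0)) by (rewrite HH0; auto).
       apply (C (fun s => fst (H s))); auto. intros w Hw. split. apply (Hdiff w Hw). apply (Hall w Hw (Hgn w Hw)). }
     assert (H2t : snd (H t) = 0).
     { replace 0 with (snd (H 0)) by (rewrite HH0; auto).
       apply (C (fun s => snd (H s))); auto. intros w Hw. split. apply (Hdiff w Hw). apply (Hall w Hw (Hgn w Hw)). }
     destruct Hne as [Z|[Z|Z]]; try contradiction. apply Z.
     destruct (H t) as [h1 h2]. simpl in *. subst. auto.
 - intros [S [[lam [p [q [r [s [b1 [b2 [Hl [Hm HSv]]]]]]]]] Hc]].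
   destruct (lorentz p q r s Hm) as [Hpr [[Es Eq]|[Es Eq]]].
   + assert (HAB : lam * (p + r) * (lam * (p - r)) <> 0).
     { replace (lam * (p + r) * (lam * (p - r))) with (lam * lam * (p*p - r*r)) by ring. rewrite Hpr.
       apply Rgt_not_eq. nra. }
     destruct (back_gen a b X S (fun u => xi (X u)) (fun u => eta (X u)) (lam * (p + r)) (lam * (p - r)) (b1 + b2) (b1 - b2))
       as [k1 [c1 [k2 [c2 [HN HR]]]]]; auto.
     * intros u Hu. split; [apply (CU u Hu)|apply (CV u Hu)].
     * intros u Hu. rewrite HSv. unfold xi, eta. simpl. subst. ring.
     * intros u Hu. rewrite HSv. unfold xi, eta. simpl. subst. ring.
     * apply (build a b X k1 c1 k2 c2); auto.
   + assert (HAB : lam * (p + r) * (lam * (p - r)) <> 0).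
     { replace (lam * (p + r) * (lam * (p - r))) with (lam * lam * (p*p - r*r)) by ring. rewrite Hpr.
       apply Rgt_not_eq. nra. }
     destruct (back_gen a b X S (fun u => eta (X u)) (fun u => xi (X u)) (lam * (p + r)) (lam * (p - r)) (b1 + b2) (b1 - b2))
       as [k1 [c1 [k2 [c2 [HN HR]]]]]; auto.
     * intros u Hu. split; [apply (CV u Hu)|apply (CU u Hu)].
     * intros u Hu. rewrite HSv. unfold xi, eta. simpl. subst. ring.
     * intros u Hu. rewrite HSv. unfold xi, eta. simpl. subst. ring.
     * apply (build a b X k2 c2 k1 c1); auto. apply NZ_sym; auto. apply Rel_sym; auto.
Qed.
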